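(* Let $t\ge3$, let $\mathcal C$ be an $(n,k,r,t)$-SLRC and let $G$ be a minimal repair graph of $\mathcal C$ with source set $S(G)$. Then for every $v\in S(G)$: 1) $|\mathrm{Out}(v)|\ge1$; 2) if $\mathrm{Out}(v)=\{v'\}$, then $\mathrm{Out}^2(v)=\mathrm{Out}(v')\ne\emptyset$; 3) if $\mathrm{Out}(v)=\{v_1\}$ and $\mathrm{Out}(v_1)=\{v_2\}$, then $\mathrm{Out}(v_2)\ne\emptyset$; 4) if $\mathrm{Out}(v)=\{v_1\}$ and $\mathrm{Out}(v_1)=\{v_2\}$, then $|\mathrm{Out}(u)|\ge2$ for every source $u\in\mathrm{In}(v_2)$; 5) if $v,w$ are two distinct sources with $|\mathrm{Out}(v)|=|\mathrm{Out}(w)|=1$, then $\mathrm{Out}(v)\ne\mathrm{Out}(w)$.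
   Context: For an $[n,k]$ linear code $\mathcal C$ over a finite field $\mathbb F$, a recovering set of $i\in[n]$ is a set $R\subseteq[n]\setminus\{i\}$ with nonzero $a_j\in\mathbb F$ such that $x_i=\sum_{j\in R}a_jx_j$ for all $x\in\mathcal C$; standing assumption: recovering sets have size $2\le|R|\le r<k$. $\mathcal C$ is an $(n,k,r,t)$-SLRC if every $E\subseteq[n]$ with $|E|\le t$ can be indexed $\{i_1,\dots,i_{|E|}\}$ so that each $i_\ell$ has a recovering set $R_\ell\subseteq([n]\setminus E)\cup\{i_1,\dots,i_{\ell-1}\}$. A repair graph of $\mathcal C$ is a directed acyclic graph on vertex set $[n]$ such that for every vertex $i$ with nonempty in-neighbourhood $\mathrm{In}(i)$, $\mathrm{In}(i)$ is a recovering set of $i$. A source is a vertex with no in-neighbours. A minimal repair graph is a repair graph with the minimum number of sources among all repair graphs of $\mathcal C$. $\mathrm{Out}(v)$ denotes the out-neighbours of $v$, and $\mathrm{Out}^2(v)=\bigcup_{u\in\mathrm{Out}(v)}\mathrm{Out}(u)\setminus\mathrm{Out}(v)$. *)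

(* Defs.v *)
From HB Require Import structures.
From mathcomp Require Import all_boot all_order all_algebra all_fingroup all_field.
Set Implicit Arguments. Unset Strict Implicit. Unset Printing Implicit Defensive.
Import GRing.Theory.
Local Open Scope ring_scope.

Definition recovering_set (F : finFieldType) (n r : nat)
  (C : {vspace 'rV[F]_n}) (i : 'I_n) (R : {set 'I_n}) : Prop :=
  [/\ i \notin R, (2 <= #|R|)%N, (#|R| <= r)%N &
   exists a : 'I_n -> F, (forall j, j \in R -> a j != 0) /\
     (forall x, x \in C -> x 0 i = \sum_(j in R) a j * x 0 j)].

(* (n,k,r,t)-SLRC property (dimension k and r < k are separate hypotheses):
   every set E of at most t erased coordinates can be listed as a duplicate-free
   sequence s = [i_1; ...; i_|E|] such that each i_l has a recovering set inside
   ([n] \ E) u {i_1, ..., i_(l-1)}. *)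
Definition SLRC (F : finFieldType) (n r t : nat) (C : {vspace 'rV[F]_n}) : Prop :=
  forall E : {set 'I_n}, (#|E| <= t)%N ->
    exists s : seq 'I_n, [/\ uniq s, [set x in s] = E &
      forall (s1 : seq 'I_n) (i : 'I_n) (s2 : seq 'I_n), s = s1 ++ i :: s2 ->
        exists R : {set 'I_n},
          recovering_set r C i R /\ R \subset (~: E) :|: [set x in s1]].

(* Directed graphs on [n] are edge relations e : rel 'I_n (e u v = edge u -> v). *)
Definition In_nb (n : nat) (e : rel 'I_n) (v : 'I_n) : {set 'I_n} := [set u | e u v].
Definition Out_nb (n : nat) (e : rel 'I_n) (v : 'I_n) : {set 'I_n} := [set u | e v u].
Definition Out2_nb (n : nat) (e : rel 'I_n) (v : 'I_n) : {set 'I_n} :=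
  (\bigcup_(u in Out_nb e v) Out_nb e u) :\: Out_nb e v.

Definition acyclic (n : nat) (e : rel 'I_n) : Prop :=
  forall u v, e u v -> ~~ connect e v u.

Definition is_source (n : nat) (e : rel 'I_n) (v : 'I_n) : bool := In_nb e v == set0.
Definition sources (n : nat) (e : rel 'I_n) : {set 'I_n} := [set v | is_source e v].

Definition repair_graph (F : finFieldType) (n r : nat) (C : {vspace 'rV[F]_n})
  (e : rel 'I_n) : Prop :=
  acyclic e /\
  forall i, In_nb e i != set0 -> recovering_set r C i (In_nb e i).

Definition minimal_repair_graph (F : finFieldType) (n r : nat)
  (C : {vspace 'rV[F]_n}) (e : rel 'I_n) : Prop :=
  repair_graph r C e /\
  forall e' : rel 'I_n, repair_graph r C e' -> (#|sources e| <= #|sources e'|)%N.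

(* Main.v *)
Require Import Defs.
From HB Require Import structures.
From mathcomp Require Import all_boot all_order all_algebra all_fingroup all_field.

Set Implicit Arguments. Unset Strict Implicit. Unset Printing Implicit Defensive.

Lemma connect_sub_rel (T : finType) (e Q : rel T) :
  reflexive Q -> transitive Q -> subrel e Q -> subrel (connect e) Q.
Proof.
move=> Qr Qt eQ x y /connectP [p pth ->] {y}.
elim: p x pth => [|z p IH] x /=; first by move=> _; apply: Qr.
by case/andP=> exz pz; apply: (Qt z); [apply: eQ | apply: IH].
Qed.

Lemma Out1 n (e : rel 'I_n) x w z : Out_nb e x = [set w] -> e x z = (z == w).
Proof. by move/setP/(_ z); rewrite !inE. Qed.

Lemma Out0 n (e : rel 'I_n) x z : Out_nb e x = set0 -> e x z = false.
Proof. by move/setP/(_ z); rewrite !inE. Qed.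

Lemma src_noin n (e : rel 'I_n) x v : v \in sources e -> e x v = false.
Proof. by rewrite inE => /eqP/setP/(_ x); rewrite !inE. Qed.

Lemma index_take_lt (T : eqType) (s : seq T) k x :
  x \in take k s -> index x s < k.
Proof.
move=> xt; rewrite -(cat_take_drop k s) index_cat xt.
apply: (leq_trans (_ : _ < size (take k s))); first by rewrite index_mem.
by rewrite size_take_min geq_minl.
Qed.

Section LinAlg.
Import GRing.Theory.
Local Open Scope ring_scope.

Lemma rec_swap (F : finFieldType) n r (C : {vspace 'rV[F]_n}) (R : {set 'I_n}) u y :
  recovering_set r C y R -> u \in R -> recovering_set r C u (y |: (R :\ u)).
Proof.
case=> yR c2 cr [a [anz ha]] uR.
have uy : u != y by apply: contraNneq yR => <-.
have yRu : y \notin R :\ u by rewrite inE negb_and yR orbT.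
have cardE : #|y |: (R :\ u)| = #|R|.
  by rewrite cardsU1 yRu [in RHS](cardsD1 u R) uR.
have au0 := anz u uR.
split; first by rewrite !inE eqxx (negbTE uy).
- by rewrite cardE.
- by rewrite cardE.
exists (fun j => if j == y then (a u)^-1 else - ((a u)^-1 * a j)); split.
  move=> j; rewrite !inE; case: eqP => [_|_] /=; first by rewrite invr_eq0.
  by case/andP=> ju jR; rewrite oppr_eq0 mulf_neq0 ?invr_eq0 ?anz.
move=> x xC; rewrite big_setU1 //= eqxx.
have -> : \sum_(j in R :\ u) (if j == y then (a u)^-1 else - ((a u)^-1 * a j)) * x 0 j
   = - ((a u)^-1 * \sum_(j in R | j != u) a j * x 0 j).
  rewrite mulr_sumr -sumrN.
  rewrite (eq_bigl (fun j => (j \in R) && (j != u))); last by move=> j; rewrite !inE andbC.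
  apply: eq_bigr => j /andP [jR _].
  have -> : (j == y) = false by apply/negP => /eqP je; move: yR; rewrite -je jR.
  by rewrite mulrA mulNr.
by rewrite (ha x xC) (bigD1 u) //= mulrDr mulrA mulVf // mul1r addrK.
Qed.
End LinAlg.

Lemma keyK (F : finFieldType) n r t (C : {vspace 'rV[F]_n}) (e : rel 'I_n)
  (E : {set 'I_n}) v :
  SLRC r t C -> repair_graph r C e ->
  (forall e', repair_graph r C e' -> #|sources e| <= #|sources e'|) ->
  #|E| <= t -> (forall x y, x \in E -> e x y -> y \in E) ->
  v \in E -> v \in sources e -> False.
Proof.
move=> slrc [acy rec] mini cardE clE vE vS.
have [s [us sE hs]] := slrc E cardE.
have hR : forall z : 'I_n, exists R : {set 'I_n}, (z \in E) ->
    recovering_set r C z R /\ R \subset ~: E :|: [set x in take (index z s) s].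
  move=> z; case: (boolP (z \in E)) => zE; last by exists set0.
  have zs : z \in s by move: zE; rewrite -sE inE.
  have eqs : s = take (index z s) s ++ z :: drop (index z s).+1 s.
    by rewrite -{2}(nth_index z zs) -(drop_nth z) ?index_mem // cat_take_drop.
  have [R [HR1 HR2]] := hs _ _ _ eqs.
  by exists R.
have [Rf HRf] := fin_all_exists hR.
pose e' := [rel x z | if z \in E then x \in Rf z else e x z].
have P1 : forall x z, x \in E -> e' x z -> (z \in E) && (index x s < index z s).
  move=> x z xE /=; case: (boolP (z \in E)) => zE; last by move/(clE _ _ xE); rewrite (negbTE zE).
  have [_ sub] := HRf z zE => xR.
  move/subsetP: sub => /(_ x xR); rewrite !inE xE /= => xt.
  by rewrite index_take_lt.
pose Q := [rel x y | if y \in E then (x \in E) ==> (index x s <= index y s)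
                     else (x \notin E) && connect e x y].
have Qr : reflexive Q by move=> x /=; case: ifP => xE; rewrite ?xE ?leqnn ?connect0.
have Qt : transitive Q.
  move=> y x z /=; case: (boolP (y \in E)) => yE; case: (boolP (z \in E)) => zE //.
  - move=> /implyP h1 /implyP h2; apply/implyP => xE.
    exact: leq_trans (h1 xE) (h2 isT).
  - by case/andP=> xE _; rewrite (negbTE xE).
  - by move=> /andP[xE cxy] /andP[_ cyz]; rewrite xE (connect_trans cxy cyz).
have eQ : subrel e' Q.
  move=> x z exz /=; case: (boolP (x \in E)) => xE.
    by case/andP: (P1 _ _ xE exz) => -> /ltnW ->.
  move: exz => /=; case: (boolP (z \in E)) => zE //= exz.
  by rewrite connect1.
have acy' : acyclic e'.
  move=> a b eab; apply/negP => /(connect_sub_rel Qr Qt eQ) /=.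
  case: (boolP (a \in E)) => aE.
    by case/andP: (P1 _ _ aE eab) => -> /=; rewrite ltnNge => /negbTE ->.
  case/andP=> bE cba; move: eab => /=; rewrite (negbTE bE) => eab.
  by move: (acy _ _ eab); rewrite cba.
have In'E : forall i, i \in E -> In_nb e' i = Rf i.
  by move=> i iE; apply/setP => x; rewrite !inE /= iE.
have In'N : forall i, i \notin E -> In_nb e' i = In_nb e i.
  by move=> i iE; apply/setP => x; rewrite !inE /= (negbTE iE).
have rg' : repair_graph r C e'.
  split=> // i; case: (boolP (i \in E)) => iE.
    by rewrite In'E //; case: (HRf i iE).
  by rewrite In'N //; apply: rec.
have sub : sources e' \subset sources e :\ v.
  apply/subsetP => i; rewrite !inE.
  case: (boolP (i \in E)) => iE.
    rewrite /is_source In'E // => /eqP R0; case: (HRf i iE) => [[_ c2 _ _] _].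
    by move: c2; rewrite R0 cards0.
  rewrite /is_source In'N // => ->; rewrite andbT; apply: contraNneq iE => ->; exact: vE.
have := mini _ rg'; have := subset_leq_card sub.
rewrite [#|sources e|](cardsD1 v) vS add1n => h1 h2.
by move: (leq_trans h2 h1); rewrite ltnn.
Qed.

Definition swap n (e : rel 'I_n) (u y : 'I_n) : rel 'I_n :=
  fun x z => if z == y then false
             else if z == u then (x == y) || (e x y && (x != u)) else e x z.

Lemma swapP (F : finFieldType) n r (C : {vspace 'rV[F]_n}) (e : rel 'I_n) u y :
  repair_graph r C e -> u \in sources e -> Out_nb e u = [set y] ->
  repair_graph r C (swap e u y) /\ #|sources (swap e u y)| <= #|sources e|.
Proof.
move=> [acy rec] uS Ou.
have euz : forall z, e u z = (z == y) by move=> z; apply: Out1.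
have uy : u != y.
  by apply/negP => /eqP uy; have := acy u y; rewrite euz eqxx uy connect0 => /(_ isT).
have su : forall z, swap e u y u z = false.
  by move=> z; rewrite /swap; case: eqP => // zy; case: eqP => _; rewrite ?eqxx ?(negbTE uy) ?euz ?andbF //; apply/eqP.
have sy : forall x, swap e u y x y = false by move=> x; rewrite /swap eqxx.
have sO : forall x z, z != y -> z != u -> swap e u y x z = e x z.
  by move=> x z zy zu; rewrite /swap (negbTE zy) (negbTE zu).
pose Q := [rel x z | if z == u then true else if x == u then false
                     else if z == y then x == y else connect e x z].
have Qr : reflexive Q.
  by move=> x /=; case: eqP => // _; case: eqP => // _; case: eqP => [->|_]; rewrite ?eqxx ?connect0.
have Qt : transitive Q.
  move=> b a c /=.
  have [//|cu] := eqVneq c u.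
  have [_|bu] := eqVneq b u; first by case: (a == u).
  have [//|au] := eqVneq a u.
  have [?|cy] := eqVneq c y.
    by move=> h1 /eqP bE; move: h1; rewrite bE eqxx.
  have [?|by'] := eqVneq b y; last by move=> hab hbc; exact: connect_trans hab hbc.
  by subst b => /eqP ->.
have eQ : subrel (swap e u y) Q.
  move=> x z exz /=; case: (z =P u) => // zu; case: (x =P u) => [xu|xu].
    by move: exz; rewrite xu su.
  case: (z =P y) => [zy|zy]; first by move: exz; rewrite zy sy.
  by rewrite connect1 // -sO //; apply/eqP.
have acy' : acyclic (swap e u y).
  move=> a b eab; apply/negP => /(connect_sub_rel Qr Qt eQ) /=.
  have au : a != u by apply: contraTneq eab => ->; rewrite su.
  have by' : b != y by apply: contraTneq eab => ->; rewrite sy.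
  rewrite (negbTE au); have [//|bu] := eqVneq b u.
  have [_|ay] := eqVneq a y; first by rewrite (negbTE by').
  move=> cba; move: eab; rewrite sO // => eab.
  by move: (acy _ _ eab); rewrite cba.
have Inu : In_nb (swap e u y) u = y |: (In_nb e y :\ u).
  apply/setP => x; rewrite !inE /swap (negbTE uy) eqxx /=.
  by rewrite andbC.
have InO : forall i, i != y -> i != u -> In_nb (swap e u y) i = In_nb e i.
  by move=> i iy iu; apply/setP => x; rewrite !inE sO.
have uIy : u \in In_nb e y by rewrite inE euz.
split; first split=> // i.
  case: (i =P y) => [-> |/eqP iy].
    by move=> /negP []; apply/eqP/setP => x; rewrite !inE sy.
  case: (i =P u) => [-> |/eqP iu]; last by rewrite InO //; apply: rec.
  move=> _; rewrite Inu; apply: rec_swap => //.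
  by apply: rec; apply/set0Pn; exists u.
have sub : sources (swap e u y) \subset y |: (sources e :\ u).
  apply/subsetP => i; rewrite !inE /is_source.
  case: (i =P y) => // /eqP iy /=.
  case: (i =P u) => [->|/eqP iu].
    by rewrite Inu => /eqP/setP/(_ y); rewrite !inE eqxx.
  by rewrite InO.
apply: (leq_trans (subset_leq_card sub)).
by rewrite cardsU1 [in X in _ <= X](cardsD1 u) uS leq_add2r leq_b1.
Qed.

Lemma card_seqset n (s : seq 'I_n) : #|[set x in s]| <= size s.
Proof. by rewrite cardsE card_size. Qed.

Theorem corollary1 (F : finFieldType) (n k r t : nat) (C : {vspace 'rV[F]_n})
  (e : rel 'I_n) :
  (3 <= t)%N -> \dim C = k -> (r < k)%N -> SLRC r t C ->
  minimal_repair_graph r C e ->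
  (forall v, v \in sources e ->
     [/\ (1 <= #|Out_nb e v|)%N,
         (forall v', Out_nb e v = [set v'] ->
            Out2_nb e v = Out_nb e v' /\ Out_nb e v' != set0),
         (forall v1 v2, Out_nb e v = [set v1] -> Out_nb e v1 = [set v2] ->
            Out_nb e v2 != set0) &
         (forall v1 v2, Out_nb e v = [set v1] -> Out_nb e v1 = [set v2] ->
            forall u, u \in sources e -> u \in In_nb e v2 ->
              (2 <= #|Out_nb e u|)%N)]) /\
  (forall v w, v \in sources e -> w \in sources e -> v != w ->
     #|Out_nb e v| = 1%N -> #|Out_nb e w| = 1%N -> Out_nb e v != Out_nb e w).
Proof.
move=> t3 _ _ slrc [rg mini].
have acy := rg.1.
have noloop : forall x, e x x = false.
  by move=> x; apply/negP => /acy; rewrite connect0.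
have K := keyK slrc rg mini.
have Kc : forall (s : seq 'I_n) v, size s <= t ->
    (forall x y, x \in s -> e x y -> y \in s) -> v \in s -> v \in sources e -> False.
  move=> s v st cl vs vS; apply: (K [set x in s] v) => //.
  - exact: leq_trans (card_seqset s) st.
  - by move=> x y; rewrite !inE; apply: cl.
  - by rewrite inE.
have mini2 : forall e', repair_graph r C e' -> #|sources e'| <= #|sources e| ->
    forall e'', repair_graph r C e'' -> #|sources e'| <= #|sources e''|.
  by move=> e' _ le e'' rg''; apply: leq_trans le (mini _ rg'').
split.
  move=> v vS; split.
  - rewrite card_gt0; apply/negP => /eqP O0.
    apply: (Kc [:: v] v) => //; [exact: leq_trans t3 | | by rewrite inE].
    by move=> x y; rewrite inE => /eqP ->; rewrite (Out0 _ O0).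
  - move=> v' Ov; split.
      apply/setP => z; rewrite /Out2_nb Ov big_set1 !inE.
      by case: eqP => // ->; rewrite noloop.
    apply/negP => /eqP O0.
    apply: (Kc [:: v; v'] v) => //; first exact: leq_trans t3.
      move=> x y; rewrite !inE => /orP [] /eqP ->.
        by rewrite (Out1 _ Ov) => ->; rewrite orbT.
      by rewrite (Out0 _ O0).
    by rewrite !inE eqxx.
  - move=> v1 v2 Ov Ov1; apply/negP => /eqP O0.
    apply: (Kc [:: v; v1; v2] v) => //; last by rewrite !inE eqxx.
    move=> x y; rewrite !inE => /or3P [] /eqP ->.
    + by rewrite (Out1 _ Ov) => /eqP ->; rewrite eqxx orbT.
    + by rewrite (Out1 _ Ov1) => /eqP ->; rewrite eqxx !orbT.
    + by rewrite (Out0 _ O0).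
  - move=> v1 v2 Ov Ov1 u uS; rewrite inE => euv2.
    rewrite leqNgt; apply/negP => c1.
    have Ou : Out_nb e u = [set v2].
      apply/esym/eqP; rewrite eqEcard sub1set inE euv2 cards1 /=.
      by rewrite -ltnS.
    have ev z := Out1 z Ov; have ev1 z := Out1 z Ov1.
    have e12 : e v1 v2 by rewrite ev1.
    have e01 : e v v1 by rewrite ev.
    have v12 : v1 != v2 by apply: contraTneq e12 => ->; rewrite noloop.
    have vu : v != u.
      by apply: contraTneq euv2 => <-; rewrite ev eq_sym (negbTE v12).
    have vv2 : v != v2 by apply: contraTneq e12 => <-; rewrite (src_noin v1 vS).
    have v1u : v1 != u by apply: contraTneq e01 => ->; rewrite (src_noin v uS).
    have [rg' le'] := swapP rg uS Ou.
    have K' := keyK slrc rg' (mini2 _ rg' le').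
    apply: (K' [set x in [:: v; v1; u]] v).
    + apply: leq_trans (card_seqset _) _; exact: t3.
    + move=> x z; rewrite !inE /swap => /or3P [] /eqP ->.
      * case: ifP => // zy; case: ifP => [/eqP ->|_]; first by rewrite ?eqxx !orbT.
        by rewrite ev => /eqP ->; rewrite eqxx orbT.
      * case: ifP => // zv2; case: ifP => [/eqP ->|_]; first by rewrite ?eqxx !orbT.
        by rewrite ev1 zv2.
      * case: ifP => // zv2; case: ifP => [/eqP ->|_]; first by rewrite ?eqxx !orbT.
        by rewrite (Out1 _ Ou) zv2.
    + by rewrite !inE eqxx.
    + rewrite inE /is_source; apply/eqP/setP => x; rewrite !inE /swap.
      by rewrite (negbTE vv2) (negbTE vu) (src_noin x vS).
move=> v w vS wS vw /eqP/cards1P [y Ov] /eqP/cards1P [y' Ow]; apply/negP => /eqP eqO.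
move: Ow; rewrite -eqO Ov => /setP/(_ y); rewrite !inE eqxx => /esym/eqP yy; subst y'.
have Ow : Out_nb e w = [set y] by rewrite -eqO.
have [rg' le'] := swapP rg vS Ov.
have K' := keyK slrc rg' (mini2 _ rg' le').
have evy : e v y by rewrite (Out1 _ Ov).
have wy : w != y by apply: contraTneq evy => <-; rewrite (src_noin v wS).
apply: (K' [set x in [:: w; v]] w).
+ apply: leq_trans (card_seqset _) _; exact: ltnW t3.
+ move=> x z; rewrite !inE /swap => /orP [] /eqP ->.
  * case: ifP => // zy; case: ifP => [/eqP ->|_]; first by rewrite ?eqxx !orbT.
    by rewrite (Out1 _ Ow) zy.
  * case: ifP => // zy; case: ifP => [/eqP ->|_]; first by rewrite ?eqxx !orbT.
    by rewrite (Out1 _ Ov) zy.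
+ by rewrite !inE eqxx.
+ rewrite inE /is_source; apply/eqP/setP => x; rewrite !inE /swap.
  by rewrite (negbTE wy) eq_sym (negbTE vw) (src_noin x wS).
Qed.
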